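(* Let $K$ be a connected 4-regular simple graph with an odd number of vertices, let $v,w$ be adjacent vertices of $K$ having exactly one common neighbour $c$, let the neighbours of $w$ be $v,a,b,c$ and the neighbours of $v$ be $w,c,d,e$, and let $S=K-\{v,w\}$. Let $\sigma$ be a bipartition of the edges of $S$ such that each part is the edge set of a spanning forest of $S$ (possibly with a single tree) in which every tree contains at least one of $a,b,d,e$. Then of the two edges of $S$ incident to $c$ exactly one lies in each part of $\sigma$, and swapping which parts these two edges are in yields a new bipartition $\sigma'$ of $E(S)$ which again has the property that each part is the edge set of a spanning forest of $S$ in which every tree contains at least one of $a,b,d,e$ (though the vertices need not be distributed among the trees in the same way).
   Context: $K-\{v,w\}$ denotes $K$ with $v$, $w$ and their incident edges removed; in $S$ the vertex $c$ has degree 2. *)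

(* Defs.v *)
From mathcomp Require Import all_boot.
Set Implicit Arguments. Unset Strict Implicit. Unset Printing Implicit Defensive.

(* Graphs: vertex type T : finType, adjacency adj : rel T (assumed symmetric,
   irreflexive in the theorem).  Edges are represented as 2-element sets
   {x, y} : {set T}. *)

Definition edges_del (T : finType) (adj : rel T) (D : {set T}) : {set {set T}} :=
  [set [set x; y] | x in ~: D, y in ~: D & adj x y].

Definition rel_of (T : finType) (F : {set {set T}}) : rel T :=
  fun x y => (x != y) && ([set x; y] \in F).

Definition has_cycle (T : finType) (F : {set {set T}}) : Prop :=
  exists s : seq T, [/\ uniq s, 3 <= size s & cycle (rel_of F) s].

Definition rooted_spanning_forest (T : finType) (V : {set T})
    (F : {set {set T}}) (R : {set T}) : Prop :=
  [/\ forall f, f \in F -> f \subset V,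
      ~ has_cycle F
    & forall x, x \in V -> exists2 r, r \in R & connect (rel_of F) x r].

(* Main.v *)
Require Import Defs.
From mathcomp Require Import all_boot.
From mathcomp Require Import zify.
Set Implicit Arguments. Unset Strict Implicit.

Lemma set2_inj (T : finType) (c x y : T) :
  c != y -> [set c; y] = [set c; x] -> y = x.
Proof.
move=> cy E; have: y \in [set c; y] by rewrite !inE eqxx orbT.
rewrite E !inE => /orP[/eqP yc|/eqP //]; by rewrite yc eqxx in cy.
Qed.

Lemma conn_map (T : finType) (e e' : rel T) (g : T -> T) :
  (forall y z, e y z -> connect e' (g y) (g z)) ->
  forall x y, connect e x y -> connect e' (g x) (g y).
Proof.
move=> H x y /connectP [p]; elim: p x => [|z p IH] x /=; first by move=> _ ->.
case/andP=> exz pz ly; exact: connect_trans (H _ _ exz) (IH _ pz ly).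
Qed.

Lemma swap_forest (T : finType) (V R : {set T}) (E : {set {set T}}) (c x1 x2 : T) :
  rooted_spanning_forest V E R -> c \notin R -> c != x1 -> c != x2 ->
  [set c; x2] \subset V -> [set c; x1] \in E ->
  (forall g, g \in E -> c \in g -> g = [set c; x1]) ->
  rooted_spanning_forest V ((E :\ [set c; x1]) :|: [set [set c; x2]]) R.
Proof.
move=> [Esub Enc Econ] cR cx1 cx2 f2V f1E Euniq.
set F := (E :\ _) :|: _.
have Fc : forall g, g \in F -> c \in g -> g = [set c; x2].
  move=> g; rewrite !inE => /orP[/andP[gf1 gE] cg|/eqP //].
  by rewrite (Euniq g gE cg) eqxx in gf1.
have Fnc : forall g, g \in F -> c \notin g -> g \in E.
  move=> g; rewrite !inE => /orP[/andP[_ //]|/eqP ->]; by rewrite !inE eqxx.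
have EF : forall g, g \in E -> c \notin g -> g \in F.
  move=> g gE cg; rewrite !inE gE andbT; apply/orP; left.
  by apply/eqP => gf; move: cg; rewrite gf !inE eqxx.
split.
- move=> g; rewrite !inE => /orP[/andP[_ /Esub //]|/eqP -> //].
- move=> [s [us ss cs]].
  case: (boolP (c \in s)) => cs_in.
  + case: (rot_to cs_in) => i s' Hrot.
    have := rot_cycle i (rel_of F) s; rewrite cs Hrot => cyc.
    have := rot_uniq i s; rewrite us Hrot => uq.
    have := size_rot i s; rewrite Hrot => sz.
    case: s' Hrot cyc uq sz => [|y [|z t]] Hrot cyc uq sz; rewrite -sz in ss => //.
    move: cyc; rewrite /= rcons_path /= => /and4P[/andP[cy Fcy] _ _ /andP[ncl Flc]].
    have y2 := set2_inj cy (Fc _ Fcy (set21 _ _)).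
    have lc : c != last z t by rewrite eq_sym.
    have Flc' : [set c; last z t] \in F by rewrite setUC.
    have l2 := set2_inj lc (Fc _ Flc' (set21 _ _)).
    move: uq; rewrite /= !inE negb_or => /and4P[_ /norP[yz yt] _ _].
    have : last z t \in z :: t by exact: mem_last.
    rewrite l2 -y2 inE => /orP[/eqP yz'|yt']; first by rewrite yz' eqxx in yz.
    by rewrite yt' in yt.
  + apply: Enc; exists s; split => //.
    apply: (sub_in_cycle (P := [pred z | z != c])) cs.
    * move=> x y /= xc yc /andP[xy Fxy]; rewrite /rel_of xy /=.
      have cn : c \notin [set x; y] by rewrite !inE negb_or !(eq_sym c); rewrite !inE in xc yc; rewrite xc yc.
      exact: Fnc Fxy cn.
    * by apply/allP => z zs /=; apply: contraNneq cs_in => <-.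
- have key : forall x, x \in V -> x != c -> exists2 r, r \in R & connect (rel_of F) x r.
    move=> x xV xc; have [r rR cxr] := Econ x xV; exists r => //.
    have rc : r != c by apply: contraNneq cR => <-.
    pose g z := if z == c then x1 else z.
    have gx : g x = x by rewrite /g (negbTE xc).
    have gr : g r = r by rewrite /g (negbTE rc).
    rewrite -gx -gr; apply: (conn_map (e := rel_of E)) cxr => y z /andP[yz Eyz].
    rewrite /g; case: (eqVneq y c) => [yc|yc].
      subst y; have := set2_inj yz (Euniq _ Eyz (set21 _ _)) => ->.
      by rewrite eq_sym (negbTE cx1).
    case: (eqVneq z c) => [zc|zc].
      subst z; have yz' : c != y by rewrite eq_sym.
      have Eyz' : [set c; y] \in E by rewrite setUC.
      have := set2_inj yz' (Euniq _ Eyz' (set21 _ _)) => ->. exact: connect0.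
    apply: connect1; rewrite /rel_of yz /=; apply: EF => //.
    by rewrite !inE negb_or !(eq_sym c) yc zc.
  move=> x xV; case: (eqVneq x c) => [->|xc]; last exact: key.
  have x2V : x2 \in V by apply: (subsetP f2V); rewrite !inE eqxx orbT.
  have x2c : x2 != c by rewrite eq_sym.
  have [r rR cr] := key x2 x2V x2c.
  exists r => //; apply: connect_trans cr; apply: connect1.
  by rewrite /rel_of cx2 /F !inE eqxx orbT.
Qed.

Lemma card4_distinct (T : finType) (x1 x2 x3 x4 : T) :
  #|[set x1; x2; x3; x4]| = 4 -> [/\ x4 != x1, x4 != x2 & x4 != x3].
Proof.
move=> H.
have le3 : #|[set x1; x2; x3]| <= 3.
  have h : #|[set x1; x2; x3]| <= #|[set x1; x2]| + #|[set x3]|.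
    by rewrite -cardsUI leq_addr.
  apply: leq_trans h _; rewrite cards1 cards2; by case: (_ != _).
have : x4 \notin [set x1; x2; x3].
  apply/negP => x4in; move: H.
  have -> : [set x1; x2; x3; x4] = [set x1; x2; x3] by apply/setUidPl; rewrite sub1set.
  by move=> H; rewrite H in le3.
by rewrite !inE !negb_or => /andP[/andP[h1 h2] h3]; split.
Qed.

Lemma edge_c (T : finType) (adj : rel T) (D : {set T}) (c : T) f :
  symmetric adj -> irreflexive adj ->
  f \in edges_del adj D -> c \in f ->
  exists y, [/\ f = [set c; y], c != y, adj c y & y \notin D].
Proof.
move=> sym irr /imset2P[x y]; rewrite !inE => xD /andP[yD axy] ->.
rewrite !inE => /orP[/eqP e0|/eqP e0]; subst c.
  exists y; split => //; apply/eqP => e0; subst; by rewrite irr in axy.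
exists x; split => //; first by rewrite setUC.
  apply/eqP => e0; subst; by rewrite irr in axy.
by rewrite sym.
Qed.

Lemma exists_c_edge (T : finType) (V R : {set T}) (E : {set {set T}}) c :
  rooted_spanning_forest V E R -> c \in V -> c \notin R ->
  0 < #|[set f in E | c \in f]|.
Proof.
case=> _ _ Hc cV cR; have [r rR /connectP[[|y p] /= pth lst]] := Hc c cV.
  by subst r; rewrite rR in cR.
case/andP: pth => /andP[cy Ecy] _; apply/card_gt0P; exists [set c; y].
by rewrite !inE Ecy !eqxx.
Qed.

Lemma uniq_c_edge (T : finType) (E : {set {set T}}) c f1 :
  #|[set f in E | c \in f]| = 1 -> f1 \in E -> c \in f1 ->
  forall g, g \in E -> c \in g -> g = f1.
Proof.
move/eqP/cards1P=> [h Hh] f1E cf1 g gE cg.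
have : f1 \in [set f in E | c \in f] by rewrite inE f1E.
have : g \in [set f in E | c \in f] by rewrite inE gE.
by rewrite Hh !inE => /eqP -> /eqP ->.
Qed.

Theorem lemma4p1 (T : finType) (adj : rel T)
  (v w a b c d e : T)
  (E1 E2 : {set {set T}}) :
  symmetric adj ->
  irreflexive adj ->
  (forall x, #|[set y | adj x y]| = 4) ->
  (forall x y, connect adj x y) ->
  odd #|T| ->
  adj v w ->
  [set y | adj v y && adj w y] = [set c] ->
  [set y | adj w y] = [set v; a; b; c] ->
  [set y | adj v y] = [set w; c; d; e] ->
  (* sigma = (E1, E2) is a bipartition of E(S), S = K - {v,w} *)
  E1 :|: E2 = edges_del adj [set v; w] ->
  E1 :&: E2 = set0 ->
  rooted_spanning_forest (~: [set v; w]) E1 [set a; b; d; e] ->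
  rooted_spanning_forest (~: [set v; w]) E2 [set a; b; d; e] ->
  (#|[set f in E1 | c \in f]| = 1 /\ #|[set f in E2 | c \in f]| = 1) /\
  (forall f1 f2, f1 \in E1 -> c \in f1 -> f2 \in E2 -> c \in f2 ->
     rooted_spanning_forest (~: [set v; w]) ((E1 :\ f1) :|: [set f2])
       [set a; b; d; e] /\
     rooted_spanning_forest (~: [set v; w]) ((E2 :\ f2) :|: [set f1])
       [set a; b; d; e]).
Proof.
move=> sym irr deg _ _ avw Hvw Hw Hv HU HI F1 F2.
have : c \in [set y | adj v y && adj w y] by rewrite Hvw set11.
rewrite inE => /andP[avc awc].
have vw : v != w by apply/eqP => e0; subst; rewrite irr in avw.
have cv : c != v by apply/eqP => e0; subst; rewrite irr in avc.
have cw : c != w by apply/eqP => e0; subst; rewrite irr in awc.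
have [_ ca cb] : [/\ c != v, c != a & c != b].
  by apply: card4_distinct; rewrite -Hw deg.
have [_ cd ce] : [/\ c != w, c != d & c != e].
  apply: card4_distinct.
  have -> : [set w; d; e; c] = [set y | adj v y].
    by rewrite Hv; apply/setP => z; rewrite !inE; case: (z == w); case: (z == c); case: (z == d); case: (z == e).
  exact: deg.
have cR : c \notin [set a; b; d; e] by rewrite !inE !negb_or ca cb cd ce.
have cV : c \in ~: [set v; w] by rewrite !inE negb_or cv cw.
set P := fun E : {set {set T}} => [set f in E | c \in f].
have Pall : #|P (edges_del adj [set v; w])| <= 2.
  set N := [set y | adj c y].
  have sub : P (edges_del adj [set v; w]) \subset [set [set c; y] | y in N :\: [set v; w]].
    apply/subsetP => f; rewrite inE => /andP[fE cf].
    have [y [-> _ acy yD]] := edge_c sym irr fE cf.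
    by apply: imset_f; rewrite !inE acy andbT; rewrite !inE in yD.
  apply: leq_trans (subset_leq_card sub) _; apply: leq_trans (leq_imset_card _ _) _.
  have sNv : [set v; w] \subset N.
    by apply/subsetP => z; rewrite !inE => /orP[/eqP->|/eqP->]; rewrite sym.
  by rewrite cardsD (setIidPr sNv) cards2 vw deg.
have P12 : #|P E1| + #|P E2| <= 2.
  apply: leq_trans Pall.
  have -> : #|P E1| + #|P E2| = #|P E1 :|: P E2|.
    rewrite cardsU (_ : P E1 :&: P E2 = set0) ?cards0 ?subn0 //.
    apply/setP => f; rewrite !inE; apply/negP => /andP[/andP[f1 _] /andP[f2 _]].
    have : f \in E1 :&: E2 by rewrite inE f1 f2.
    by rewrite HI inE.
  apply: subset_leq_card; apply/subsetP => f; rewrite !inE -HU !inE.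
  by case/orP => /andP[-> ->]; rewrite ?orbT.
have p1 := exists_c_edge F1 cV cR.
have p2 := exists_c_edge F2 cV cR.
have C1 : #|P E1| = 1 by move: P12 p1 p2; rewrite /P; lia.
have C2 : #|P E2| = 1 by move: P12 p1 p2; rewrite /P; lia.
split; first by split.
move=> f1 f2 f1E cf1 f2E cf2.
have f1D : f1 \in edges_del adj [set v; w] by rewrite -HU inE f1E.
have f2D : f2 \in edges_del adj [set v; w] by rewrite -HU inE f2E orbT.
have [x1 [ef1 cx1 _ _]] := edge_c sym irr f1D cf1.
have [x2 [ef2 cx2 _ _]] := edge_c sym irr f2D cf2.
have U1 := uniq_c_edge C1 f1E cf1.
have U2 := uniq_c_edge C2 f2E cf2.
have sub1 : f1 \subset ~: [set v; w] by case: F1 => H _ _; apply: H.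
have sub2 : f2 \subset ~: [set v; w] by case: F2 => H _ _; apply: H.
subst f1 f2; split.
  exact: swap_forest F1 cR cx1 cx2 sub2 f1E U1.
exact: swap_forest F2 cR cx2 cx1 sub1 f2E U2.
Qed.
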